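(* Let $\rho=(r,U)$ be a universally quantified rule, let $(\pi\colon L\to\overline L,\gamma\colon\overline L\rightharpoonup\overline R)$ be an instantiation of $\rho$, let $u\in U$ and let $(\pi,\gamma)\oplus u=(p_u'\circ\pi,\eta)$ with $\eta\colon\overline L_u\rightharpoonup\overline R_u$. Then there exist subgraph morphisms $\mu_u'\colon\overline L_u\rightharpoonup\overline L$ and $\mu_u''\colon\overline R_u\rightharpoonup\overline R$ such that $\gamma\circ\mu_u'=\mu_u''\circ\eta$.
   Context: Fix a finite label set $\Lambda$ with arity function $\mathrm{ar}\colon\Lambda\to\mathbb N$. A (hyper)graph $G=(V_G,E_G,c_G,l_G)$ consists of finite sets $V_G$ (nodes) and $E_G$ (edges), a connection function $c_G\colon E_G\to V_G^*$ and a labelling $l_G\colon E_G\to\Lambda$ with $|c_G(e)|=\mathrm{ar}(l_G(e))$; an edge $e$ is incident to a node $v$ if $v$ occurs in $c_G(e)$. A morphism $\phi\colon G\rightharpoonup G'$ is a pair of partial functions $\phi_V,\phi_E$ such that whenever $\phi_E(e)$ is defined, $\phi_V$ is defined on all nodes incident to $e$, $l_{G'}(\phi_E(e))=l_G(e)$ and $\phi_V(c_G(e))=c_{G'}(\phi_E(e))$. ''Total'' means defined everywhere. Pushouts are taken in the category of graphs and partial morphisms (always exist, unique up to isomorphism; concretely: quotient of $G_1\sqcup G_2$ by the smallest equivalence identifying $\phi(x)$ and $\psi(x)$ for $x\in G_0$, dropping classes containing the image of an $x\in G_0$ on which $\phi$ or $\psi$ is undefined and edge classes incident to dropped node classes).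 A subgraph morphism is a morphism that is injective and surjective (as partial functions on nodes and edges). A universally quantified rule is $\rho=(r,U)$ with $r\colon L\rightharpoonup R$ and $U$ a finite set of pairs $u=(p_u,q_u)$, $p_u\colon L\to L_u$ total injective, $q_u\colon L_u\rightharpoonup R_u$, such that for every $x\in L$, $q_u(p_u(x))$ is defined and has exactly one preimage under $q_u$; $Q(u)$ is the set of $v\in V_L$ such that some edge incident to $p_u(v)$ has no preimage under $p_u$, required nonempty. Instantiations $(\pi\colon L\to\overline L$ total injective, $\gamma\colon\overline L\rightharpoonup\overline R)$ are defined recursively: $(\mathrm{id}_L,r)$ is one (length 0); if $(\pi,\gamma)$ is one of length $n$ and $u\in U$, let $\overline L_u$ with $p_u'\colon\overline L\to\overline L_u$, $\pi'\colon L_u\to\overline L_u$ be the pushout of $\pi,p_u$, let $\overline R_u$ with $\alpha\colon\overline R\rightharpoonup\overline R_u$, $\beta\colon R_u\rightharpoonup\overline R_u$ be the pushout of $\gamma\circ\pi$ and $q_u\circ p_u$, and $\eta\colon\overline L_u\rightharpoonup\overline R_u$ the unique morphism with $\eta\circ p_u'=\alpha\circ\gamma$, $\eta\circ\pi'=\beta\circ q_u$; then $(\pi,\gamma)\oplus u:=(p_u'\circ\pi,\eta)$ is an instantiation of length $n+1$. *)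

(* Defs.v *)
From mathcomp Require Import all_boot.
From Stdlib Require List.
Set Implicit Arguments.
Unset Strict Implicit.
Unset Printing Implicit Defensive.

Section Graphs.
Variables (Lab : finType) (ar : Lab -> nat).

Record graph := Graph {
  V : finType;
  E : finType;
  conn : E -> seq V;
  lab : E -> Lab;
  conn_ar : forall e, size (conn e) = ar (lab e) }.

(** Partial morphisms: partial maps on nodes and edges such that whenever the
    edge map is defined on [e], the node map is defined on all nodes incident
    to [e], labels are preserved and connections are mapped to connections. *)
Record morph (G H : graph) := Morph {
  mV : V G -> option (V H);
  mE : E G -> option (E H);
  mok : forall e e', mE e = Some e' ->
          lab e' = lab e /\ map mV (conn e) = map Some (conn e') }.

Definition idm (G : graph) : morph G G.
Proof.
refine (@Morph G G (fun v => Some v) (fun e => Some e) _).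
by move=> e e' [<-]; split.
Defined.

Lemma comp_ok (G H K : graph) (g : morph H K) (f : morph G H) :
  forall e e'', obind (mE g) (mE f e) = Some e'' ->
    lab e'' = lab e /\
    map (fun v => obind (mV g) (mV f v)) (conn e) = map Some (conn e'').
Proof.
move=> e e''; case Hf: (mE f e) => [e'|] //= Hg.
have [l1 c1] := mok Hf; have [l2 c2] := mok Hg.
split; first by rewrite l2 l1.
have -> : (fun v => obind (mV g) (mV f v)) = obind (mV g) \o mV f by [].
by rewrite map_comp c1 -map_comp.
Qed.

Definition mcomp (G H K : graph) (g : morph H K) (f : morph G H) : morph G K :=
  @Morph G K (fun v => obind (mV g) (mV f v))
             (fun e => obind (mE g) (mE f e)) (@comp_ok G H K g f).

Definition meq (G H : graph) (f g : morph G H) : Prop :=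
  (forall v, mV f v = mV g v) /\ (forall e, mE f e = mE g e).

Definition total (G H : graph) (f : morph G H) : Prop :=
  (forall v, mV f v <> None) /\ (forall e, mE f e <> None).

Definition injectivem (G H : graph) (f : morph G H) : Prop :=
  (forall v w z, mV f v = Some z -> mV f w = Some z -> v = w) /\
  (forall e d z, mE f e = Some z -> mE f d = Some z -> e = d).

Definition surjectivem (G H : graph) (f : morph G H) : Prop :=
  (forall z, exists v, mV f v = Some z) /\ (forall z, exists e, mE f e = Some z).

Definition subgraph_morph (G H : graph) (f : morph G H) : Prop :=
  injectivem f /\ surjectivem f.

Definition is_pushout (G0 G1 G2 P : graph) (f : morph G0 G1) (g : morph G0 G2)
    (a : morph G1 P) (b : morph G2 P) : Prop :=
  meq (mcomp a f) (mcomp b g) /\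
  forall (Q : graph) (a' : morph G1 Q) (b' : morph G2 Q),
    meq (mcomp a' f) (mcomp b' g) ->
    (exists h : morph P Q, meq (mcomp h a) a' /\ meq (mcomp h b) b') /\
    (forall h h' : morph P Q,
        meq (mcomp h a) a' -> meq (mcomp h b) b' ->
        meq (mcomp h' a) a' -> meq (mcomp h' b) b' -> meq h h').

Record ucomp (L : graph) := UComp {
  uL : graph;
  uR : graph;
  up : morph L uL;
  uq : morph uL uR }.

(** A rule candidate rho = (r : L -> R, U), U a finite set (list) of components. *)
Record rule := Rule {
  rL : graph;
  rR : graph;
  rr : morph rL rR;
  rU : seq (ucomp rL) }.

Definition Qset (L : graph) (u : ucomp L) (v : V L) : Prop :=
  exists (e : E (uL u)) (w : V (uL u)),
    mV (up u) v = Some w /\ w \in conn e /\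
    (forall e0 : E L, mE (up u) e0 <> Some e).

Definition uq_component (L : graph) (u : ucomp L) : Prop :=
  total (up u) /\ injectivem (up u) /\
  (forall v : V L, exists w y, mV (up u) v = Some w /\ mV (uq u) w = Some y /\
                     forall z, mV (uq u) z = Some y -> z = w) /\
  (forall e : E L, exists d y, mE (up u) e = Some d /\ mE (uq u) d = Some y /\
                     forall z, mE (uq u) z = Some y -> z = d) /\
  (exists v, Qset u v).

Definition uq_rule (rho : rule) : Prop :=
  forall u, List.In u (rU rho) -> uq_component u.

(** Instantiations (pi : L -> Lbar, gamma : Lbar -> Rbar) of rho. Pushouts are
    any pushouts (they are unique up to isomorphism). *)
Inductive instantiation (rho : rule) :
    forall (Lb Rb : graph), morph (rL rho) Lb -> morph Lb Rb -> Prop :=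
| inst0 : instantiation (idm (rL rho)) (rr rho)
| instS : forall (Lb Rb : graph) (pi : morph (rL rho) Lb) (gamma : morph Lb Rb)
    (u : ucomp (rL rho)) (Lbu Rbu : graph)
    (pu' : morph Lb Lbu) (pi' : morph (uL u) Lbu)
    (alpha : morph Rb Rbu) (beta : morph (uR u) Rbu) (eta : morph Lbu Rbu),
    instantiation pi gamma ->
    List.In u (rU rho) ->
    is_pushout pi (up u) pu' pi' ->
    is_pushout (mcomp gamma pi) (mcomp (uq u) (up u)) alpha beta ->
    meq (mcomp eta pu') (mcomp alpha gamma) ->
    meq (mcomp eta pi') (mcomp beta (uq u)) ->
    instantiation (mcomp pu' pi) eta.

End Graphs.

(* Main.v *)
Require Import Defs.
From mathcomp Require Import all_boot.
From Stdlib Require List.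
Set Implicit Arguments.
Unset Strict Implicit.
Unset Printing Implicit Defensive.

Lemma obindA (A B C : Type) (f : A -> option B) (g : B -> option C) o :
  obind (fun x => obind g (f x)) o = obind g (obind f o).
Proof. by case: o. Qed.

Section Helpers.
Variables (Lab : finType) (ar : Lab -> nat).
Local Notation graph := (graph ar).

Section Sub.
Variables (P : graph) (PV : pred (V P)) (PE : pred (E P)).
Hypothesis closed : forall e, PE e -> all PV (conn e).

Definition subVT : finType := {v : V P | PV v}.
Definition subET : finType := {e : E P | PE e}.

Lemma map_insub (s : seq (V P)) : all PV s ->
  map Some (pmap (insub : V P -> option subVT) s) = map insub s.
Proof.
elim: s => //= x s IH /andP [Hx Hs].
case: (insubP subVT x) => [y _ Hy|]; last by rewrite Hx.
by rewrite /= IH.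
Qed.

Lemma subG_ok (e : subET) :
  size (pmap (insub : V P -> option subVT) (conn (val e))) = ar (lab (val e)).
Proof.
have Ha := closed (valP e).
by rewrite -(size_map Some) map_insub // size_map conn_ar.
Qed.

Definition subG : graph :=
  @Graph Lab ar subVT subET (fun e => pmap insub (conn (val e)))
     (fun e => lab (val e)) subG_ok.

Definition incl : morph subG P.
Proof.
refine (@Morph _ _ subG P (fun v => Some (val v)) (fun e => Some (val e)) _).
move=> e e' [<-]; split => //=.
have -> : (fun v : subVT => Some (val v)) = Some \o val by [].
rewrite map_comp; congr (map _ _).
have Ha := closed (valP e).
elim: (conn (val e)) Ha => //= x s IH /andP [Hx Hs].
case: (insubP (subVT) x) => [y _ Hy|]; last by rewrite Hx.
by rewrite /= Hy IH.
Defined.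

Definition restr (G : graph) (m : morph G P) : morph G subG.
Proof.
refine (@Morph _ _ G subG (fun x => obind insub (mV m x))
                 (fun x => obind insub (mE m x)) _).
move=> x e'; case Hm: (mE m x) => [e|] //=.
case: (insubP (subET) e) => // e0 He0 Hv [<-].
have [l c] := mok Hm.
split; first by rewrite /= Hv.
rewrite /=.
have -> : (fun v => obind insub (mV m v)) = obind insub \o mV m by [].
rewrite map_comp c Hv map_insub.
by rewrite -map_comp.
exact: closed He0.
Defined.

End Sub.

Lemma joint (G0 G1 G2 P : graph) (f : morph G0 G1) (g : morph G0 G2)
   (a : morph G1 P) (b : morph G2 P) : is_pushout f g a b ->
  (forall v, (exists x, mV a x = Some v) \/ (exists x, mV b x = Some v)) /\
  (forall e, (exists x, mE a x = Some e) \/ (exists x, mE b x = Some e)).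
Proof.
move=> [comm univ].
pose PV := fun v => [exists x, mV a x == Some v] || [exists x, mV b x == Some v].
pose PE := fun e => [exists x, mE a x == Some e] || [exists x, mE b x == Some e].
have closed : forall e, PE e -> all PV (conn e).
  move=> e; rewrite /PE => /orP [] /existsP [x /eqP Hx]; have [_ c] := mok Hx;
  apply/allP => v Hv; have : Some v \in map Some (conn e) by exact: map_f.
  - rewrite -c => /mapP [x' _ Hx']; rewrite /PV; apply/orP; left; apply/existsP; exists x'; by rewrite Hx'.
  - rewrite -c => /mapP [x' _ Hx']; rewrite /PV; apply/orP; right; apply/existsP; exists x'; by rewrite Hx'.
pose S := subG closed.
have Hm : meq (mcomp (restr closed a) f) (mcomp (restr closed b) g).
  split => x /=; rewrite !obindA; congr (obind _ _); [exact: (comm.1 x)|exact: (comm.2 x)].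
have [[h [Ha1 Hb1]] _] := univ S _ _ Hm.
have [_ uniq] := univ P a b comm.
have Hid := uniq (mcomp (incl closed) h) (idm P).
have [HV HE] : meq (mcomp (incl closed) h) (idm P).
  apply: Hid.
  - split => x /=; rewrite obindA.
    + have := Ha1.1 x; rewrite /= => ->; case Hx: (mV a x) => [v|] //=.
      case: insubP => [y _ Hy|]; first by rewrite /= Hy.
      rewrite /PV; case/negP; apply/orP; left.
      by apply/existsP; exists x; rewrite Hx.
    + have := Ha1.2 x; rewrite /= => ->; case Hx: (mE a x) => [v|] //=.
      case: insubP => [y _ Hy|]; first by rewrite /= Hy.
      rewrite /PE; case/negP; apply/orP; left.
      by apply/existsP; exists x; rewrite Hx.
  - split => x /=; rewrite obindA.
    + have := Hb1.1 x; rewrite /= => ->; case Hx: (mV b x) => [v|] //=.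
      case: insubP => [y _ Hy|]; first by rewrite /= Hy.
      rewrite /PV; case/negP; apply/orP; right.
      by apply/existsP; exists x; rewrite Hx.
    + have := Hb1.2 x; rewrite /= => ->; case Hx: (mE b x) => [v|] //=.
      case: insubP => [y _ Hy|]; first by rewrite /= Hy.
      rewrite /PE; case/negP; apply/orP; right.
      by apply/existsP; exists x; rewrite Hx.
  - split => x /=; [by case: (mV a x)|by case: (mE a x)].
  - split => x /=; [by case: (mV b x)|by case: (mE b x)].
split.
- move=> v; have := HV v; rewrite /=; case: (mV h v) => // s [Hs].
  have : PV v by rewrite -Hs; exact: (valP s).
  move=> /orP [] /existsP [x /eqP Hx]; [left|right]; by exists x.
- move=> v; have := HE v; rewrite /=; case: (mE h v) => // s [Hs].
  have : PE v by rewrite -Hs; exact: (valP s).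
  move=> /orP [] /existsP [x /eqP Hx]; [left|right]; by exists x.
Qed.


Section Ext.
Variables (G0 G1 G2 : graph) (k : morph G0 G2) (f : morph G0 G1).

Definition preV (y : V G2) : option (V G0) := [pick x | mV k x == Some y].
Definition preE (d : E G2) : option (E G0) := [pick x | mE k x == Some d].

Lemma preV_spec y x : preV y = Some x -> mV k x = Some y.
Proof. by rewrite /preV; case: pickP => // x' /eqP H [<-]. Qed.
Lemma preE_spec y x : preE y = Some x -> mE k x = Some y.
Proof. by rewrite /preE; case: pickP => // x' /eqP H [<-]. Qed.
Lemma preV_none y : (forall x, mV k x <> Some y) -> preV y = None.
Proof. by move=> H; rewrite /preV; case: pickP => // x /eqP /H. Qed.
Lemma preE_none y : (forall x, mE k x <> Some y) -> preE y = None.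
Proof. by move=> H; rewrite /preE; case: pickP => // x /eqP /H. Qed.

Hypothesis Hk : injectivem k.

Lemma preV_k x y : mV k x = Some y -> preV y = Some x.
Proof.
move=> Hy; rewrite /preV; case: pickP => [x' /eqP H|H].
  by rewrite (Hk.1 _ _ _ H Hy).
by move: (H x); rewrite Hy eqxx.
Qed.
Lemma preE_k x y : mE k x = Some y -> preE y = Some x.
Proof.
move=> Hy; rewrite /preE; case: pickP => [x' /eqP H|H].
  by rewrite (Hk.2 _ _ _ H Hy).
by move: (H x); rewrite Hy eqxx.
Qed.

Lemma map_rel (s : seq (V G0)) (t : seq (V G2)) :
  map (mV k) s = map Some t ->
  map (fun w => obind (mV f) (preV w)) t = map (mV f) s.
Proof.
elim: s t => [|x s IH] [|y t] //= [H1 H2].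
by rewrite (preV_k H1) /= (IH _ H2).
Qed.

Lemma ext_ok d e' : obind (mE f) (preE d) = Some e' ->
  lab e' = lab d /\
  map (fun w => obind (mV f) (preV w)) (conn d) = map Some (conn e').
Proof.
case Hp: (preE d) => [e0|] //= Hf.
have Hk0 := preE_spec Hp.
have [l1 c1] := mok Hk0; have [l2 c2] := mok Hf.
split; first by rewrite l2 l1.
by rewrite (map_rel c1) c2.
Qed.

Definition ext : morph G2 G1 :=
  @Morph _ _ G2 G1 (fun w => obind (mV f) (preV w))
     (fun d => obind (mE f) (preE d)) ext_ok.

End Ext.

Lemma po_inv (G0 G1 G2 P : graph) (f : morph G0 G1) (g : morph G0 G2)
   (a : morph G1 P) (b : morph G2 P) (Hpo : is_pushout f g a b)
   (Ht : Defs.total g) (Hi : injectivem g) :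
  exists mu : morph P G1, meq (mcomp mu a) (idm G1) /\
     meq (mcomp mu b) (ext f Hi) /\ subgraph_morph mu.
Proof.
have [JV JE] := joint Hpo.
have [comm univ] := Hpo.
have H1 : meq (mcomp (idm G1) f) (mcomp (ext f Hi) g).
  split => x /=.
  - case Hgx: (mV g x) => [y|]; last by have := Ht.1 x.
    by rewrite /= (preV_k Hi Hgx) /=; case: (mV f x).
  - case Hgx: (mE g x) => [y|]; last by have := Ht.2 x.
    by rewrite /= (preE_k Hi Hgx) /=; case: (mE f x).
have [[mu [Ha Hb]] _] := univ G1 (idm G1) (ext f Hi) H1.
exists mu; split => //; split => //.
have keyV : forall v z, mV mu v = Some z -> mV a z = Some v.
  move=> v z Hz; case: (JV v) => [[x Hx]|[x Hx]].
  - by have := Ha.1 x; rewrite /= Hx /= Hz => -[->].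
  - have := Hb.1 x; rewrite /= Hx /= Hz.
    case Hp: (preV g x) => [x0|] //= Hf.
    have Hg := preV_spec Hp.
    have := comm.1 x0; rewrite /= -Hf Hg /= Hx; done.
have keyE : forall v z, mE mu v = Some z -> mE a z = Some v.
  move=> v z Hz; case: (JE v) => [[x Hx]|[x Hx]].
  - by have := Ha.2 x; rewrite /= Hx /= Hz => -[->].
  - have := Hb.2 x; rewrite /= Hx /= Hz.
    case Hp: (preE g x) => [x0|] //= Hf.
    have Hg := preE_spec Hp.
    have := comm.2 x0; rewrite /= -Hf Hg /= Hx; done.
split; split.
- move=> v w z H1' H2'; have := keyV _ _ H1'; rewrite (keyV _ _ H2'); by case.
- move=> v w z H1' H2'; have := keyE _ _ H1'; rewrite (keyE _ _ H2'); by case.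
- move=> z; have := Ha.1 z; rewrite /=; case: (mV a z) => [v|] //= H; by exists v.
- move=> z; have := Ha.2 z; rewrite /=; case: (mE a z) => [v|] //= H; by exists v.
Qed.

End Helpers.

Theorem mainTheorem2 (Lab : finType) (ar : Lab -> nat) (rho : rule ar)
    (Hrho : uq_rule rho)
    (Lb Rb : graph ar) (pi : morph (rL rho) Lb) (gamma : morph Lb Rb)
    (Hinst : instantiation pi gamma)
    (u : ucomp (rL rho)) (Hu : List.In u (rU rho))
    (Lbu Rbu : graph ar) (pu' : morph Lb Lbu) (pi' : morph (uL u) Lbu)
    (Hpo1 : is_pushout pi (up u) pu' pi')
    (alpha : morph Rb Rbu) (beta : morph (uR u) Rbu)
    (Hpo2 : is_pushout (mcomp gamma pi) (mcomp (uq u) (up u)) alpha beta)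
    (eta : morph Lbu Rbu)
    (Heta1 : meq (mcomp eta pu') (mcomp alpha gamma))
    (Heta2 : meq (mcomp eta pi') (mcomp beta (uq u))) :
  exists (mu1 : morph Lbu Lb) (mu2 : morph Rbu Rb),
    subgraph_morph mu1 /\ subgraph_morph mu2 /\
    meq (mcomp gamma mu1) (mcomp mu2 eta).
Proof.
have [totp [injp [Hn [He _]]]] := Hrho u Hu.
have totk : Defs.total (mcomp (uq u) (up u)).
  split => x /=.
  - by have [w [y [Hw [Hy _]]]] := Hn x; rewrite Hw /= Hy.
  - by have [w [y [Hw [Hy _]]]] := He x; rewrite Hw /= Hy.
have injk : injectivem (mcomp (uq u) (up u)).
  split => v w z /=.
  - case Hv: (mV (up u) v) => [v'|] //= Hqv.
    case Hw: (mV (up u) w) => [w'|] //= Hqw.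
    have [w1 [y1 [Hw1 [Hy1 Hu1]]]] := Hn v.
    move: Hw1; rewrite Hv => -[?]; subst w1.
    move: Hy1; rewrite Hqv => -[?]; subst y1.
    have ? := Hu1 _ Hqw; subst w'.
    exact: injp.1 _ _ _ Hv Hw.
  - case Hv: (mE (up u) v) => [v'|] //= Hqv.
    case Hw: (mE (up u) w) => [w'|] //= Hqw.
    have [w1 [y1 [Hw1 [Hy1 Hu1]]]] := He v.
    move: Hw1; rewrite Hv => -[?]; subst w1.
    move: Hy1; rewrite Hqv => -[?]; subst y1.
    have ? := Hu1 _ Hqw; subst w'.
    exact: injp.2 _ _ _ Hv Hw.
have [mu1 [Ha1 [Hb1 Hs1]]] := po_inv Hpo1 totp injp.
have [mu2 [Ha2 [Hb2 Hs2]]] := po_inv Hpo2 totk injk.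
exists mu1, mu2; split => //; split => //.
have [comm1 univ1] := Hpo1.
have Hc : meq (mcomp gamma pi) (mcomp (mcomp gamma (ext pi injp)) (up u)).
  split => x /=.
  - case Hx: (mV (up u) x) => [w|]; last by have := totp.1 x.
    by rewrite /= (preV_k injp Hx).
  - case Hx: (mE (up u) x) => [w|]; last by have := totp.2 x.
    by rewrite /= (preE_k injp Hx).
have [_ uniq] := univ1 Rb gamma (mcomp gamma (ext pi injp)) Hc.
apply: uniq.
- split => x /=; rewrite obindA.
  + by have := Ha1.1 x; rewrite /= => ->.
  + by have := Ha1.2 x; rewrite /= => ->.
- split => x /=; rewrite obindA.
  + by have := Hb1.1 x; rewrite /= => ->.
  + by have := Hb1.2 x; rewrite /= => ->.
- split => x /=; rewrite obindA.
  + have := Heta1.1 x; rewrite /= => ->.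
    case: (mV gamma x) => [z|] //=.
    by have := Ha2.1 z; rewrite /=.
  + have := Heta1.2 x; rewrite /= => ->.
    case: (mE gamma x) => [z|] //=.
    by have := Ha2.2 z; rewrite /=.
- split => x /=; rewrite obindA.
  + have := Heta2.1 x; rewrite /= => ->.
    case Hq: (mV (uq u) x) => [y|] /=.
    * have := Hb2.1 y; rewrite /= => ->.
      case Hp: (preV (up u) x) => [x0|] /=.
      -- have Hpx := preV_spec Hp.
         have Hk : mV (mcomp (uq u) (up u)) x0 = Some y by rewrite /= Hpx /= Hq.
         by rewrite (preV_k injk Hk).
      -- rewrite preV_none //= => x0; rewrite /=.
         case Hx0: (mV (up u) x0) => [w|] //= Hw.
         have [w1 [y1 [Hw1 [Hy1 Hu1]]]] := Hn x0.
         move: Hw1; rewrite Hx0 => -[?]; subst w1.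
         move: Hy1; rewrite Hw => -[?]; subst y1.
         have ? := Hu1 _ Hq; subst x.
         by rewrite (preV_k injp Hx0) in Hp.
    * case Hp: (preV (up u) x) => [x0|] //=.
      have Hpx := preV_spec Hp.
      have [w1 [y1 [Hw1 [Hy1 Hu1]]]] := Hn x0.
      by move: Hw1; rewrite Hpx => -[?]; subst w1; rewrite Hq in Hy1.
  + have := Heta2.2 x; rewrite /= => ->.
    case Hq: (mE (uq u) x) => [y|] /=.
    * have := Hb2.2 y; rewrite /= => ->.
      case Hp: (preE (up u) x) => [x0|] /=.
      -- have Hpx := preE_spec Hp.
         have Hk : mE (mcomp (uq u) (up u)) x0 = Some y by rewrite /= Hpx /= Hq.
         by rewrite (preE_k injk Hk).
      -- rewrite preE_none //= => x0; rewrite /=.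
         case Hx0: (mE (up u) x0) => [w|] //= Hw.
         have [w1 [y1 [Hw1 [Hy1 Hu1]]]] := He x0.
         move: Hw1; rewrite Hx0 => -[?]; subst w1.
         move: Hy1; rewrite Hw => -[?]; subst y1.
         have ? := Hu1 _ Hq; subst x.
         by rewrite (preE_k injp Hx0) in Hp.
    * case Hp: (preE (up u) x) => [x0|] //=.
      have Hpx := preE_spec Hp.
      have [w1 [y1 [Hw1 [Hy1 Hu1]]]] := He x0.
      by move: Hw1; rewrite Hpx => -[?]; subst w1; rewrite Hq in Hy1.
Qed.
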